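(* Let $\mathcal{N}$ be either the $(2n+1)$-dimensional Heisenberg algebra ($q=2$) or the $(4n+3)$-dimensional quaternionic Heisenberg algebra ($q=4$) over $\mathbb{R}$, with basis $e_1,\dots,e_{qn}$ of $\mathcal{V}$ and $Z_1,\dots,Z_{q-1}$ of $\mathcal{Z}$ as in the context. Let $f:\mathcal{N}\to\mathcal{N}$ be a Lie ring homomorphism with $f(\mathcal{V})\subseteq\mathcal{V}$, $f(Z_i)\neq0$ for $i=1,\dots,q-1$, and $f(e_1)=e_1$. Let $g=\pi\circ f\circ\iota:\mathcal{N}_2\to\mathcal{N}_2$. Then: (1) $g$ is a Lie ring homomorphism with $g(\mathcal{V}_2)\subseteq\mathcal{V}_2$, $g(Z_i)\neq0$ for all $i$, and $g|_{\mathcal{Z}}=f|_{\mathcal{Z}}$; (2) if $X\in\mathbb{R}\text{-span}\{e_1,e_{q+1},\dots,e_{qn}\}$, then $f_{e_i}(X)=0$ for each $i=2,\dots,q$; (3) for all $x\in\mathbb{R}$ and $i,j\in\{2,\dots,q\}$, $f_{e_i}(xe_j)=f_{Z_{i-1}}(xZ_{j-1})$.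
   Context: A Lie ring homomorphism is an additive bracket-preserving map. Heisenberg case: basis $X_1,Y_1,\dots,X_n,Y_n,Z_1$ with $[X_t,Y_t]=Z_1$ and other brackets zero; set $(e_1,\dots,e_{2n})=(X_1,Y_1,\dots,X_n,Y_n)$. Quaternionic case: basis $X_t,Y_t,V_t,W_t$ ($t=1..n$), $Z_1,Z_2,Z_3$ with nonzero brackets (and antisymmetric counterparts) $[X_t,Y_t]=Z_1$, $[X_t,V_t]=Z_2$, $[X_t,W_t]=Z_3$, $[Y_t,V_t]=Z_3$, $[Y_t,W_t]=-Z_2$, $[V_t,W_t]=Z_1$, brackets between different $t$ zero; set $(e_1,\dots,e_{4n})=(X_1,Y_1,V_1,W_1,\dots,X_n,Y_n,V_n,W_n)$. In both cases $\mathcal{V}=\mathbb{R}\text{-span}\{e_1,\dots,e_{qn}\}$, $\mathcal{Z}=\mathbb{R}\text{-span}\{Z_1,\dots,Z_{q-1}\}$ is central, $\mathcal{V}_1=\mathbb{R}\text{-span}\{e_1,\dots,e_q\}$, $\mathcal{V}_2=\mathbb{R}\text{-span}\{e_{q+1},\dots,e_{qn}\}$, $\mathcal{N}_2=\mathcal{V}_2\oplus\mathcal{Z}$ (a subalgebra), $\pi:\mathcal{N}\to\mathcal{N}_2$ is the projection $\pi(X+Y)=Y$ for $X\in\mathcal{V}_1$, $Y\in\mathcal{N}_2$, and $\iota:\mathcal{N}_2\to\mathcal{N}$ the inclusion. For $X\in\mathcal{N}$, write $f(X)=\sum_{i=1}^{qn}f_{e_i}(X)e_i+\sum_{i=1}^{q-1}f_{Z_i}(X)Z_i$.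 *)

(* Defs.v *)
From HB Require Import structures.
From mathcomp Require Import all_boot all_order all_algebra.
From mathcomp Require Import reals.
Set Implicit Arguments. Unset Strict Implicit. Unset Printing Implicit Defensive.
Import Order.TTheory GRing.Theory Num.Theory.
Local Open Scope ring_scope.

Inductive kind := Heis | QHeis.

Definition qd (k : kind) : nat := match k with Heis => 2%N | QHeis => 4%N end.

(* Structure constants of one block (0-based positions a b in 0..q-1,
   0-based centre index c in 0..q-2):  [e_a, e_b] = sum_c sc k a b c Z_c.
   Quaternionic (X,Y,V,W = 0,1,2,3): [X,Y]=Z1, [X,V]=Z2, [X,W]=Z3,
   [Y,V]=Z3, [Y,W]=-Z2, [V,W]=Z1, plus antisymmetric counterparts. *)
Definition sc {R : realType} (k : kind) (a b c : nat) : R :=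
  match k with
  | Heis => match a, b, c with
            | 0, 1, 0 => 1 | 1, 0, 0 => -1 | _, _, _ => 0 end
  | QHeis => match a, b, c with
             | 0, 1, 0 => 1 | 1, 0, 0 => -1
             | 0, 2, 1 => 1 | 2, 0, 1 => -1
             | 0, 3, 2 => 1 | 3, 0, 2 => -1
             | 1, 2, 2 => 1 | 2, 1, 2 => -1
             | 1, 3, 1 => -1 | 3, 1, 1 => 1
             | 2, 3, 0 => 1 | 3, 2, 0 => -1
             | _, _, _ => 0 end
  end.

(* The Lie algebra N = V (+) Z, with V = R^(qn) (coordinates on e_1..e_qn,
   stored 0-based) and Z = R^(q-1) (coordinates on Z_1..Z_(q-1)). *)
Definition NN (R : realType) (k : kind) (n : nat) : Type :=
  ('rV[R]_(qd k * n) * 'rV[R]_((qd k).-1))%type.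

(* Lie bracket: e_i, e_j (0-based) in the same block t (i %/ q = j %/ q)
   bracket according to sc; everything else (incl. Z) is central. *)
Definition lie {R : realType} {k : kind} {n : nat} (x y : NN R k n) : NN R k n :=
  (0, \row_(c < (qd k).-1)
        \sum_(i < qd k * n) \sum_(j < qd k * n)
          (if (i %/ qd k == j %/ qd k)%N
           then sc k (i %% qd k) (j %% qd k) c else 0) * x.1 0 i * y.1 0 j).

(* x e_i, 1-based index i (zero vector if i is out of range). *)
Definition eV {R : realType} (k : kind) (n : nat) (x : R) (i : nat) : NN R k n :=
  (\row_(l < qd k * n) (if (l.+1 == i)%N then x else 0), 0).

(* x Z_i, 1-based index i. *)
Definition eZ {R : realType} (k : kind) (n : nat) (x : R) (i : nat) : NN R k n :=
  (0, \row_(l < (qd k).-1) (if (l.+1 == i)%N then x else 0)).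

(* coordinate functions: v = sum_i fe v i e_i + sum_i fZ v i Z_i (1-based) *)
Definition fe {R : realType} {k : kind} {n : nat} (v : NN R k n) (i : nat) : R :=
  \sum_(l < qd k * n | (l.+1 == i)%N) v.1 0 l.
Definition fZ {R : realType} {k : kind} {n : nat} (v : NN R k n) (i : nat) : R :=
  \sum_(l < (qd k).-1 | (l.+1 == i)%N) v.2 0 l.

Definition lie_ring_hom {R : realType} {k : kind} {n : nat}
  (f : NN R k n -> NN R k n) : Prop :=
  (forall x y, f (x + y) = f x + f y) /\ (forall x y, f (lie x y) = lie (f x) (f y)).

Definition inV {R : realType} {k : kind} {n : nat} (x : NN R k n) : Prop := x.2 = 0.
Definition inZ {R : realType} {k : kind} {n : nat} (x : NN R k n) : Prop := x.1 = 0.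

(* N_2 = V_2 (+) Z, V_2 = span{e_(q+1),...,e_(qn)} *)
Definition inN2 {R : realType} {k : kind} {n : nat} (x : NN R k n) : Prop :=
  forall l : 'I_(qd k * n), (l < qd k)%N -> x.1 0 l = 0.

(* projection pi : N -> N_2 along V_1 (result viewed inside N) *)
Definition proj2 {R : realType} {k : kind} {n : nat} (x : NN R k n) : NN R k n :=
  (\row_(l < qd k * n) (if (l < qd k)%N then 0 else x.1 0 l), x.2).

Definition lie_ring_hom_N2 {R : realType} {k : kind} {n : nat}
  (g : NN R k n -> NN R k n) : Prop :=
  (forall x, inN2 x -> inN2 (g x)) /\
  (forall x y, inN2 x -> inN2 y -> g (x + y) = g x + g y) /\
  (forall x y, inN2 x -> inN2 y -> g (lie x y) = lie (g x) (g y)).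

(* Main.v *)
Require Import Defs.
From HB Require Import structures.
From mathcomp Require Import all_boot all_order all_algebra.
From mathcomp Require Import reals.
Import Order.TTheory GRing.Theory Num.Theory.
Local Open Scope ring_scope.

Lemma sc0j (R : realType) k j c : (j < qd k)%N -> (c < (qd k).-1)%N ->
  sc k 0 j c = (j == c.+1)%:R :> R.
Proof.
case: k; case: j => [|[|[|[|j]]]]; case: c => [|[|[|c]]] //=.
Qed.

Lemma scj0 (R : realType) k j c : (j < qd k)%N -> (c < (qd k).-1)%N ->
  sc k j 0 c = - (j == c.+1)%:R :> R.
Proof.
case: k; case: j => [|[|[|[|j]]]]; case: c => [|[|[|c]]] //= _ _; by rewrite ?oppr0 ?opprK.
Qed.

Lemma q2 k : (2 <= qd k)%N. Proof. by case: k. Qed.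

Lemma divq0 {k} {j} : (j < qd k)%N -> (j %/ qd k = 0)%N /\ (j %% qd k = j)%N.
Proof. by move=> h; rewrite divn_small // modn_small. Qed.

Lemma divq1 {k} {j} : (qd k <= j)%N -> (0 %/ qd k == j %/ qd k)%N = false.
Proof.
move=> h; have hq := q2 k.
have : (0 < j %/ qd k)%N by rewrite divn_gt0 // (leq_trans _ hq).
by rewrite div0n; case: (j %/ qd k)%N.
Qed.

Lemma divq1' {k} {j} : (qd k <= j)%N -> (0 == j %/ qd k)%N = false.
Proof. by move=> h; rewrite -(divq1 h) div0n. Qed.

Lemma lie_e1l (R : realType) k n (a : R) (w : NN R k n) (c : 'I_(qd k).-1)
  (j : 'I_(qd k * n)) : val j = c.+1 -> (lie (eV k n a 1) w).2 0 c = a * w.1 0 j.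
Proof.
move=> hj; rewrite /lie /= mxE.
have hq := q2 k.
have hc : (c < (qd k).-1)%N := ltn_ord c.
have hq0 : (0 < qd k * n)%N by apply: leq_ltn_trans (ltn_ord j).
have hjq : (j < qd k)%N by rewrite hj -ltn_predRL.
rewrite [LHS](bigD1 (Ordinal hq0)) //= [X in _ + X]big1 ?addr0; last first.
  move=> i hi; rewrite big1 // => j' _; rewrite mxE.
  have -> : (i.+1 == 1)%N = false by case: i hi => [[|i] Hi] //=.
  by rewrite mulr0 mul0r.
rewrite mxE /= (bigD1 j) //= big1 ?addr0; last first.
  move=> j' hj'; case: (ltnP j' (qd k)) => hj'q.
    have [-> ->] := divq0 (k:=k) hj'q.
    rewrite div0n eqxx mod0n sc0j //.
    have -> : (j' == c.+1 :> nat) = false.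
      by apply/negP => /eqP E; move: hj'; rewrite -(inj_eq val_inj) /= E hj eqxx.
    by rewrite !mul0r.
  by rewrite divq1 // !mul0r.
have [-> ->] := divq0 (k:=k) hjq.
by rewrite div0n eqxx mod0n sc0j // hj eqxx !mul1r.
Qed.

Lemma lie_e1r (R : realType) k n (a : R) (w : NN R k n) (c : 'I_(qd k).-1)
  (j : 'I_(qd k * n)) : val j = c.+1 -> (lie w (eV k n a 1)).2 0 c = - (a * w.1 0 j).
Proof.
move=> hj; rewrite /lie /= mxE exchange_big /=.
have hq := q2 k.
have hc : (c < (qd k).-1)%N := ltn_ord c.
have hq0 : (0 < qd k * n)%N by apply: leq_ltn_trans (ltn_ord j).
have hjq : (j < qd k)%N by rewrite hj -ltn_predRL.
rewrite [LHS](bigD1 (Ordinal hq0)) //= [X in _ + X]big1 ?addr0; last first.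
  move=> i hi; rewrite big1 // => j' _; rewrite mxE.
  have -> : (i.+1 == 1)%N = false by case: i hi => [[|i] Hi] //=.
  by rewrite mulr0.
rewrite (bigD1 j) //= big1 ?addr0; last first.
  move=> j' hj'; rewrite mxE /=; case: (ltnP j' (qd k)) => hj'q.
    have [-> ->] := divq0 (k:=k) hj'q.
    rewrite div0n eqxx mod0n scj0 //.
    have -> : (j' == c.+1 :> nat) = false.
      by apply/negP => /eqP E; move: hj'; rewrite -(inj_eq val_inj) /= E hj eqxx.
    by rewrite oppr0 !mul0r.
  by rewrite eq_sym divq1 // !mul0r.
have [-> ->] := divq0 (k:=k) hjq.
rewrite mxE /= div0n eqxx mod0n scj0 // hj eqxx.
by rewrite mulN1r mulrC mulrN.
Qed.

Lemma feE (R : realType) k n (v : NN R k n) (l : 'I_(qd k * n)) : fe v l.+1 = v.1 0 l.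
Proof. by rewrite /fe (big_pred1 l) // => l' /=; rewrite eqSS. Qed.

Lemma fZE (R : realType) k n (v : NN R k n) (l : 'I_(qd k).-1) : fZ v l.+1 = v.2 0 l.
Proof. by rewrite /fZ (big_pred1 l) // => l' /=; rewrite eqSS. Qed.

Lemma proj2_Z (R : realType) k n (z : NN R k n) : z.1 = 0 -> proj2 z = z.
Proof.
case: z => z1 z2 /= h; rewrite /proj2 /=; congr pair; apply/matrixP => i j.
by rewrite h !mxE; case: ifP.
Qed.

Lemma proj2D (R : realType) k n (a b : NN R k n) : proj2 (a + b) = proj2 a + proj2 b.
Proof.
rewrite /proj2; congr pair; apply/matrixP => i j; rewrite !mxE.
by case: ifP; rewrite ?addr0.
Qed.

Lemma lie_proj (R : realType) k n (a b : NN R k n) :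
  (forall l : 'I_(qd k * n), (0 < l < qd k)%N -> a.1 0 l = 0) ->
  (forall l : 'I_(qd k * n), (0 < l < qd k)%N -> b.1 0 l = 0) ->
  lie a b = lie (proj2 a) (proj2 b).
Proof.
move=> ha hb; rewrite /lie; congr pair; apply/matrixP => i c; rewrite !mxE.
apply: eq_bigr => x _; apply: eq_bigr => y _; rewrite !mxE /=.
have hc : (c < (qd k).-1)%N := ltn_ord c.
case: (ltnP x (qd k)) => hx; case: (ltnP y (qd k)) => hy.
- rewrite !mulr0.
  have [-> ->] := divq0 (k:=k) hx; have [-> ->] := divq0 (k:=k) hy.
  case: (posnP x) => x0; last by rewrite ha ?x0 // mulr0 mul0r.
  case: (posnP y) => y0; last by rewrite hb ?y0 // mulr0.
  by rewrite x0 y0 eqxx sc0j ?(leq_trans _ (q2 k)) //= !mul0r.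
- by have [-> _] := divq0 (k:=k) hx; rewrite divq1' // !mul0r.
- by have [-> _] := divq0 (k:=k) hy; rewrite eq_sym divq1' // !mul0r.
- by [].
Qed.

Theorem lemma6p4 (R : realType) (k : kind) (n : nat) (f : NN R k n -> NN R k n) :
  (0 < n)%N ->
  lie_ring_hom f ->
  (forall x, inV x -> inV (f x)) ->
  (forall i, (1 <= i < qd k)%N -> f (eZ k n 1 i) <> 0) ->
  f (eV k n 1 1) = eV k n 1 1 ->
  let g := fun x => proj2 (f x) in
  (* (1) *)
  (lie_ring_hom_N2 g /\
   (forall x, inN2 x -> inV x -> inV (g x)) /\
   (forall i, (1 <= i < qd k)%N -> g (eZ k n 1 i) <> 0) /\
   (forall z, inZ z -> g z = f z)) /\
  (* (2) *)
  (forall X : NN R k n, inV X -> (forall i, (2 <= i <= qd k)%N -> fe X i = 0) ->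
     forall i, (2 <= i <= qd k)%N -> fe (f X) i = 0) /\
  (* (3) *)
  (forall (x : R) (i j : nat), (2 <= i <= qd k)%N -> (2 <= j <= qd k)%N ->
     fe (f (eV k n x j)) i = fZ (f (eZ k n x j.-1)) i.-1).
Proof.
move=> hn [fadd fbr] fV fZ0 fe1 g.
have f0 : f 0 = 0.
  have h := fadd 0 0; rewrite addr0 in h.
  by apply: (@addrI _ (f 0)); rewrite -h addr0.
have hq := q2 k.
have hqn : (qd k <= qd k * n)%N by rewrite leq_pmulr.
have ordc : forall c : 'I_(qd k).-1, (c.+1 < qd k * n)%N.
  move=> c; apply: leq_trans hqn; rewrite -ltn_predRL; exact: ltn_ord.
set e1 := eV k n 1 1 in fe1 *.
have P2 : forall X : NN R k n, (forall l : 'I_(qd k * n), (0 < l < qd k)%N -> X.1 0 l = 0) ->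
    forall l : 'I_(qd k * n), (0 < l < qd k)%N -> (f X).1 0 l = 0.
  move=> X hX.
  have hL : lie X e1 = 0.
    apply: (f_equal2 pair) => //; apply/matrixP => r c.
    rewrite ord1 (@lie_e1r _ _ _ _ _ _ (Ordinal (ordc c))) //= hX ?mulr0 ?oppr0 ?mxE //=.
    by move: (ltn_ord c); rewrite ltn_predRL.
  move=> l /andP [hl0 hl].
  have hc : (l.-1 < (qd k).-1)%N by rewrite ltn_predRL prednK.
  have := f_equal (fun v : NN R k n => v.2 0 (Ordinal hc)) (f_equal f hL).
  rewrite fbr fe1 f0 (@lie_e1r _ _ _ _ _ _ (l)) /=; last by rewrite prednK.
  by rewrite mxE mul1r => /eqP; rewrite oppr_eq0 => /eqP.
have fZin : forall z : NN R k n, z.1 = 0 -> (f z).1 = 0.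
  move=> [z1 z2] /= hz; subst z1.
  pose w : NN R k n := (\row_(l < qd k * n) \sum_(c < (qd k).-1 | (c.+1 == l)%N) z2 0 c, 0).
  have -> : (0, z2) = lie e1 w.
    apply: (f_equal2 pair) => //; apply/matrixP => r c.
    rewrite ord1 (@lie_e1l _ _ _ _ _ _ (Ordinal (ordc c))) //= mxE mul1r (big_pred1 c) //.
  by rewrite fbr.
have hN2 : forall x : NN R k n, inN2 x -> forall l : 'I_(qd k * n), (0 < l < qd k)%N -> (f x).1 0 l = 0.
  move=> x hx; apply: P2 => l /andP [_ hl]; exact: hx.
split; [split; [|split; [|split]] | split].
- split; [|split].
  + by move=> x _ l hl; rewrite /g /proj2 /= mxE hl.
  + by move=> x y _ _; rewrite /g fadd proj2D.
  + move=> x y hx hy; rewrite /g fbr proj2_Z //; apply: lie_proj; exact: hN2.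
- by move=> x _ hv; rewrite /g /inV /proj2 /=; exact: fV.
- by move=> i hi; rewrite /g proj2_Z; [exact: fZ0 | apply: fZin].
- by move=> z hz; rewrite /g proj2_Z //; exact: fZin.
- move=> X _ hX i /andP [hi2 hi].
  have hl : (i.-1 < qd k * n)%N by apply: leq_trans hqn; rewrite prednK ?(ltn_trans _ hi2).
  have -> : i = (Ordinal hl).+1 by rewrite /= prednK ?(ltn_trans _ hi2).
  rewrite feE; apply: P2 => /=.
    move=> l' /andP [hl0 hl']; rewrite -feE; apply: hX; by rewrite ltnS hl0.
  by case: i hi2 hi hl => [|[|i']].
- move=> x i j /andP [hi2 hi] /andP [hj2 hj].
  have E : eZ k n x j.-1 = lie e1 (eV k n x j).
    apply: (f_equal2 pair) => //; apply/matrixP => r c.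
    rewrite ord1 (@lie_e1l _ _ _ _ _ _ (Ordinal (ordc c))) //= !mxE mul1r /=.
    by case: j hj2 {hj} => [|[|j']].
  rewrite E fbr fe1.
  have hl : (i.-1 < qd k * n)%N by apply: leq_trans hqn; rewrite prednK ?(ltn_trans _ hi2).
  have hc : (i.-2 < (qd k).-1)%N.
    by case: i hi2 hi {hl} => [|[|i']] //= _; rewrite -ltnS; case: (qd k) hq.
  have -> : i.-1 = (Ordinal hc).+1 by rewrite /=; case: (i) hi2 => [|[|i']].
  have {1}-> : i = (Ordinal hl).+1 by rewrite /= prednK ?(ltn_trans _ hi2).
  rewrite feE fZE (@lie_e1l _ _ _ _ _ _ (Ordinal hl)) ?mul1r //=.
  by case: i hi2 {hi hl hc} => [|[|i']].
Qed.
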